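(* Let $d\ge2$, let $\Omega=\{x\in\mathbb R^d:\ \ell_j(x)>b_j,\ j=1,\dots,m\}$ be a nonempty bounded open convex polytope, and let $E\subset\mathbb R^d$ carry a Borel probability measure $\mu$ such that $(E,\mu)$ is weakly incoming to $\Omega$. Let $x_0\in\overline\Omega$ and $k=\mathrm c(x_0)$. Then there exist $\epsilon>0$ and measurable subsets $F_1,\dots,F_k\subset E$ with $\mu(F_i)>0$ for all $i$, such that: (a) there exist $r_0>0$ and $I\subset\{1,\dots,m\}$ with $\#I=k$ such that $\Omega\cap B(x_0,r_0)=\big(\bigcap_{i\in I}H_i^+\big)\cap B(x_0,r_0)$; (b) there exist $\theta_1,\dots,\theta_k\in\{\pm1\}$ and a bijection $\{1,\dots,k\}\ni n\mapsto i_n\in I$ such that for every $n\in\{1,\dots,k\}$ and every $f_n\in F_n$, $\theta_nf_n$ is strictly incoming to $H_{i_n}$ and $\theta_nf_n$ is incoming to $H_{i_m}$ for all $m>n$. Moreover, the sets $F_1,\dots,F_k$ can be chosen with arbitrarily small diameter.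
   Context: $\ell_j$ are linear forms and $b_j$ reals; $B(x_0,r)$ is the open ball. Define $\mathrm c(x)=0$ for $x\in\Omega$, $+\infty$ for $x\notin\overline\Omega$, $\#\{i:\ell_i(x)=b_i\}$ for $x\in\partial\Omega$. $(E,\mu)$ is weakly incoming to $\Omega$ if for every $x_0\in\partial\Omega$ there exist $\epsilon>0$, $\theta\in\{\pm1\}$ and a measurable $F\subset E$ with $\mu(F)>0$ such that $\mathrm c(x_0+\theta te)<\mathrm c(x_0)$ for all $t\in]0,\epsilon]$, $e\in F$. $H_k=\ker\ell_k$, $H_k^+=\{y:\ell_k(y)>b_k\}$, $\nu_k$ is the unit vector orthogonal to $H_k$ with $\ell_k(\nu_k)>0$. A nonzero vector $u$ is incoming to $H_k$ if $\langle u,\nu_k\rangle\ge0$ and strictly incoming if $\langle u,\nu_k\rangle>0$. *)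

(* Defs.v *)
From HB Require Import structures.
From mathcomp Require Import all_boot all_order all_algebra.
From mathcomp Require Import all_classical all_reals all_analysis.

Set Implicit Arguments.
Unset Strict Implicit.
Unset Printing Implicit Defensive.

Import Order.TTheory GRing.Theory Num.Theory.
Import numFieldNormedType.Exports.
Local Open Scope classical_set_scope.
Local Open Scope ring_scope.

(* Points of R^d are row vectors 'rV[R]_d.  A linear form l on R^d is
   represented by its coefficient vector a : l(x) = <a, x>. *)

Definition dotv (R : realType) (d : nat) (u v : 'rV[R]_d) : R :=
  \sum_(i < d) u ord0 i * v ord0 i.

Definition enorm (R : realType) (d : nat) (u : 'rV[R]_d) : R :=
  Num.sqrt (dotv u u).

Definition eball (R : realType) (d : nat) (x0 : 'rV[R]_d) (r : R) : set 'rV[R]_d :=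
  [set y | enorm (y - x0) < r].

Definition lform (R : realType) (d : nat) (a : 'rV[R]_d) (x : 'rV[R]_d) : R :=
  dotv a x.

Definition polytope (R : realType) (d m : nat) (a : 'I_m -> 'rV[R]_d)
  (b : 'I_m -> R) : set 'rV[R]_d :=
  [set x | forall j : 'I_m, b j < lform (a j) x].

Definition Hplus (R : realType) (d m : nat) (a : 'I_m -> 'rV[R]_d)
  (b : 'I_m -> R) (k : 'I_m) : set 'rV[R]_d :=
  [set y | b k < lform (a k) y].

(** The function c : 0 on Omega, +oo outside the closure, and the number of
    active constraints on the boundary (Omega is open, so its boundary is
    closure Omega minus Omega). *)
Definition cfun (R : realType) (d m : nat) (a : 'I_m -> 'rV[R]_d)
  (b : 'I_m -> R) (x : 'rV[R]_d) : \bar R :=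
  if x \in polytope a b then 0%E
  else if x \in closure (polytope a b) then
    (#|[set j : 'I_m | lform (a j) x == b j]|%:R)%:E
  else +oo%E.

Definition nuv (R : realType) (d m : nat) (a : 'I_m -> 'rV[R]_d) (k : 'I_m)
  : 'rV[R]_d := (enorm (a k))^-1 *: a k.

Definition incoming (R : realType) (d m : nat) (a : 'I_m -> 'rV[R]_d)
  (u : 'rV[R]_d) (k : 'I_m) : Prop :=
  u != 0 /\ 0 <= dotv u (nuv a k).

Definition strictly_incoming (R : realType) (d m : nat) (a : 'I_m -> 'rV[R]_d)
  (u : 'rV[R]_d) (k : 'I_m) : Prop :=
  u != 0 /\ 0 < dotv u (nuv a k).

Definition borelRd (R : realType) (d : nat) := g_sigma_algebraType (@open 'rV[R]_d).

Definition weakly_incoming (R : realType) (d m : nat) (a : 'I_m -> 'rV[R]_d)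
  (b : 'I_m -> R) (E : set 'rV[R]_d) (mu : probability (borelRd R d) R) : Prop :=
  forall x0, x0 \in closure (polytope a b) `\` polytope a b ->
    exists eps : R, 0 < eps /\ exists theta : R, (theta = 1 \/ theta = -1) /\
    exists F : set 'rV[R]_d, F `<=` E /\ measurable (F : set (borelRd R d)) /\
      (0 < mu F)%E /\
      forall t e, 0 < t -> t <= eps -> F e ->
        (cfun a b (x0 + (theta * t) *: e) < cfun a b x0)%E.

(* Main.v *)
Require Import Defs.
From HB Require Import structures.
From mathcomp Require Import all_boot all_order all_algebra.
From mathcomp Require Import all_classical all_reals all_analysis.
Import Order.TTheory GRing.Theory Num.Theory.
Import numFieldNormedType.Exports.
Local Open Scope classical_set_scope.
Local Open Scope ring_scope.
From mathcomp Require Import ring lra zify.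
From mathcomp Require Import ring lra.
Section S.
Variables (R : realType) (d : nat).
Implicit Types (u v w x y : 'rV[R]_d).

Lemma sum_cont (r : seq 'I_d) (f : 'I_d -> 'rV[R]_d -> R) :
  (forall i, continuous (f i)) -> continuous (fun x => \sum_(i <- r) f i x).
Proof.
move=> fc; elim: r => [|i r IH].
  under eq_fun do rewrite big_nil. exact: cst_continuous.
under eq_fun do rewrite big_cons.
move=> x; apply: continuousD; [exact: fc|exact: IH].
Qed.

Lemma dotv_cont u : continuous (fun x => dotv u x).
Proof.
rewrite /dotv; apply: sum_cont => i x.
apply: continuousM; first exact: cst_continuous.
exact: coord_continuous.
Qed.

Lemma dotvC u v : dotv u v = dotv v u.
Proof. by apply: eq_bigr => i _; rewrite mulrC. Qed.

Lemma dotvDr u v w : dotv u (v + w) = dotv u v + dotv u w.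
Proof. by rewrite /dotv -big_split; apply: eq_bigr => i _; rewrite mxE mulrDr. Qed.

Lemma dotvZr u c v : dotv u (c *: v) = c * dotv u v.
Proof. by rewrite /dotv mulr_sumr; apply: eq_bigr => i _; rewrite mxE mulrCA. Qed.

Lemma dotvBr u v w : dotv u (v - w) = dotv u v - dotv u w.
Proof. by rewrite /dotv -sumrB; apply: eq_bigr => i _; rewrite !mxE mulrBr. Qed.

Lemma dotv0r u : dotv u 0 = 0.
Proof. by rewrite /dotv big1 // => i _; rewrite mxE mulr0. Qed.

Lemma open_meas (A : set 'rV[R]_d) : open A -> measurable (A : set (borelRd R d)).
Proof. by move=> oA; apply: sub_sigma_algebra. Qed.

Lemma closed_meas (A : set 'rV[R]_d) : closed A -> measurable (A : set (borelRd R d)).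
Proof.
move=> cA; rewrite -[A]setCK; apply: measurableC; apply: open_meas.
by rewrite openC.
Qed.

Lemma closed_pre (f : 'rV[R]_d -> R) (D : set R) :
  continuous f -> closed D -> closed (f @^-1` D).
Proof.
move=> fc cD; rewrite -openC; have -> : ~` (f @^-1` D) = f @^-1` (~` D) by [].
  apply: open_comp.
  by move=> z _; exact: fc.
by rewrite openC.
Qed.

Lemma open_pre (f : 'rV[R]_d -> R) (D : set R) :
  continuous f -> open D -> open (f @^-1` D).
Proof. by move=> fc oD; apply: open_comp => // z _; exact: fc. Qed.

End S.
Arguments dotv_cont {R d}.
Arguments closed_pre {R d f D}.
Arguments open_pre {R d f D}.
Arguments dotvC {R d}.
Arguments dotvDr {R d}.
Arguments dotvZr {R d}.
Arguments dotvBr {R d}.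
Arguments dotv0r {R d}.
Section P.
Variables (R : realType) (d m : nat) (a : 'I_m -> 'rV[R]_d) (b : 'I_m -> R).
Local Notation P := (polytope a b).
Definition act (x : 'rV[R]_d) : {set 'I_m} := [set j | lform (a j) x == b j].

Lemma closure_ge x : x \in closure P -> forall j, b j <= lform (a j) x.
Proof.
move=> /set_mem hx j.
have cC : closed [set y | b j <= lform (a j) y].
  have := closed_pre (dotv_cont (a j)) (@closed_ge _ (b j)). by [].
have sub : P `<=` [set y | b j <= lform (a j) y] by move=> y /(_ j) /ltW.
by move: hx; rewrite closureE => /(smallest_sub cC sub).
Qed.

Lemma poly_act x : x \in P -> act x = finset.set0.
Proof.
move=> /set_mem hx; apply/setP => j; rewrite !inE.
by rewrite gt_eqF //; exact: hx.
Qed.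

Lemma cfun_cl x : x \in closure P -> cfun a b x = (#|act x|%:R)%:E.
Proof.
move=> hx; rewrite /cfun hx; case: ifP => hP.
  by rewrite poly_act // cards0.
congr ((_%:R)%:E); apply: eq_card => j; rewrite inE.
by apply/idP/idP => [/set_mem|h]; [|apply/mem_set].
Qed.

Lemma cfun_ncl x : x \notin closure P -> cfun a b x = +oo%E.
Proof.
move=> hx; rewrite /cfun (negbTE hx); case: ifP => // hP.
by case/negP: hx; apply/mem_set/subset_closure/set_mem.
Qed.

Lemma cfun_lt_cl x r : (cfun a b x < r%:E)%E -> x \in closure P.
Proof.
case: (boolP (x \in closure P)) => // hx.
by rewrite cfun_ncl // ltNge leey.
Qed.

Lemma act_empty_poly x : x \in closure P -> act x = finset.set0 -> x \in P.
Proof.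
move=> hx h0; apply/mem_set => j.
have : j \notin act x by rewrite h0 inE.
rewrite inE => hne; rewrite lt_neqAle closure_ge // andbT.
by rewrite eq_sym.
Qed.
End P.
Arguments act {R d m}.
Arguments closure_ge {R d m}.
Arguments poly_act {R d m}.
Arguments cfun_cl {R d m}.
Arguments cfun_ncl {R d m}.
Arguments cfun_lt_cl {R d m}.
Arguments act_empty_poly {R d m}.
Section N.
Variables (R : realType) (d : nat).
Implicit Types (u v : 'rV[R]_d).

Lemma dotv_self_ge0 u : 0 <= dotv u u.
Proof. by apply: sumr_ge0 => i _; rewrite -expr2 sqr_ge0. Qed.

Lemma coord_le_enorm v i : `|v ord0 i| <= enorm v.
Proof.
rewrite /enorm -sqrtr_sqr ler_sqrt; last exact: dotv_self_ge0.
rewrite /dotv (bigD1 i) //= expr2 lerDl.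
by apply: sumr_ge0 => j _; rewrite -expr2 sqr_ge0.
Qed.

Lemma dot_bound u v : `|dotv u v| <= (\sum_i `|u ord0 i|) * enorm v.
Proof.
rewrite /dotv mulr_suml; apply: le_trans (ler_norm_sum _ _ _) _.
apply: ler_sum => i _; rewrite normrM ler_wpM2l //; exact: coord_le_enorm.
Qed.

Lemma dotv_self_gt0 u : u != 0 -> 0 < dotv u u.
Proof.
move=> hu; rewrite lt_def dotv_self_ge0 andbT; apply/negP => /eqP h.
case/negP: hu; apply/eqP/matrixP => i j; rewrite ord1 mxE.
have := psumr_eq0P (fun k (_ : true) => (eq_ind _ (fun z => 0 <= z) (sqr_ge0 (u ord0 k)) _ (expr2 _))) h (i := j) isT.
by move/eqP; rewrite -expr2 sqrf_eq0 => /eqP.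
Qed.

Lemma enorm_gt0 u : u != 0 -> 0 < enorm u.
Proof. by move=> hu; rewrite /enorm sqrtr_gt0 dotv_self_gt0. Qed.

Lemma exists_small (I : eqType) (s : seq I) (g : I -> R) :
  exists2 r, 0 < r & forall j, j \in s -> 0 < g j -> r <= g j.
Proof.
elim: s => [|j s [r r0 hr]]; first by exists 1.
case: (boolP (0 < g j)) => gj.
  exists (Order.min r (g j)); first by rewrite lt_min r0.
  move=> k; rewrite inE => /orP [/eqP -> _|ks gk]; first by rewrite ge_min lexx orbT.
  by rewrite ge_min hr.
exists r => // k; rewrite inE => /orP [/eqP -> gk|ks gk]; first by rewrite gk in gj.
exact: hr.
Qed.
End N.
Arguments exists_small {R I}.
Arguments dot_bound {R d}.
Arguments enorm_gt0 {R d}.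
Arguments dotv_self_gt0 {R d}.
Arguments coord_le_enorm {R d}.

Section A.
Variables (R : realType) (d m : nat) (a : 'I_m -> 'rV[R]_d) (b : 'I_m -> R).
Local Notation P := (polytope a b).

Lemma part_a x0 : x0 \in closure P -> exists2 r0, 0 < r0 &
  P `&` eball x0 r0 =
    (\bigcap_(i in [set j | j \in act a b x0]) Hplus a b i) `&` eball x0 r0.
Proof.
move=> hx.
pose C j := \sum_i `|a j ord0 i| + 1.
have Cpos j : 0 < C j by rewrite /C ltr_wpDl // sumr_ge0.
pose g j := (lform (a j) x0 - b j) / C j.
have [r r0 hr] := exists_small (enum 'I_m) g.
exists r => //.
apply/seteqP; split => y [hy hb]; split => //.
  by move=> i _; exact: hy i.
move=> j; case: (boolP (j \in act a b x0)) => hj; first exact: hy j hj.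
have gt : b j < lform (a j) x0.
  by rewrite lt_neqAle closure_ge // andbT eq_sym; move: hj; rewrite inE.
have gpos : 0 < g j by rewrite divr_gt0 // subr_gt0.
have := hr j (mem_enum _ _) gpos; rewrite /g ler_pdivlMr // => hrg.
have hbd := dot_bound (a j) (y - x0).
have e1 : (\sum_i `|a j ord0 i|) * enorm (y - x0) <= C j * enorm (y - x0).
  by rewrite ler_wpM2r // ?lerDl // /enorm sqrtr_ge0.
have e2 : C j * enorm (y - x0) < C j * r by rewrite ltr_pM2l //; exact: hb.
have e3 : lform (a j) y = lform (a j) x0 + dotv (a j) (y - x0).
  by rewrite dotvBr /lform addrC subrK.
rewrite /= e3.
have := le_trans hbd e1; rewrite ler_norml => /andP [h1 _].
rewrite mulrC in hrg.
lra.
Qed.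
End A.
Section M.
Context (dsp : measure_display) (T : measurableType dsp) (R : realType).

Lemma meas_forall (n : nat) (F : 'I_n -> set T) :
  (forall i, measurable (F i)) -> measurable [set e | forall i, F i e].
Proof.
move=> mF.
have H : forall r : seq 'I_n, measurable [set e | forall i, i \in r -> F i e].
  elim=> [|j r IH].
    rewrite (_ : [set e | _] = setT); first exact: measurableT.
    by apply/seteqP; split => // x _ i; rewrite in_nil.
  rewrite (_ : [set e | _] = F j `&` [set e | forall i, i \in r -> F i e]).
    exact: measurableI.
  apply/seteqP; split => x /=.
    by move=> h; split => [|i ir]; apply: h; rewrite inE ?eqxx ?ir ?orbT.
  by move=> [h1 h2] i; rewrite inE => /orP [/eqP ->|/h2].
rewrite (_ : [set e | _] = [set e | forall i, i \in enum 'I_n -> F i e]) //.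
by apply/seteqP; split => x /= h i => [_|]; apply: h; rewrite ?mem_enum.
Qed.

Lemma pos_select (I : countType) (mu : {measure set T -> \bar R})
  (G : I -> set T) (F : set T) :
  measurable F -> (0 < mu F)%E -> F `<=` \bigcup_t G t ->
  (forall t, measurable (G t)) -> exists t, (0 < mu (F `&` G t))%E.
Proof.
move=> mF mu0 FG mG; apply: contrapT => hne.
have h0 : forall t, mu (F `&` G t) = 0%E.
  move=> t; apply/eqP; rewrite eq_le measure_ge0 andbT leNgt.
  by apply/negP => h; apply: hne; exists t.
pose H n := if unpickle n is Some t then F `&` G t else set0.
have nH : forall n, mu.-negligible (H n).
  move=> n; exists (H n); split => //; rewrite /H; case: (unpickle n) => [t|].
  - exact: measurableI.
  - exact: measurable0.
  - by rewrite h0.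
  - by rewrite measure0.
have [N [mN muN FN]] := negligible_bigcup nH.
have : (mu F <= mu N)%E.
  apply: le_measure; rewrite ?inE //.
  move=> x Fx; apply: FN; have [t _ Gx] := FG x Fx.
  by exists (pickle t) => //; rewrite /H pickleK.
by rewrite muN leNgt mu0.
Qed.
End M.
Section B.
Variables (R : realType) (d : nat).

Definition box (eta : R) (z : 'rV[int]_d) : set 'rV[R]_d :=
  [set e | forall i, `|e ord0 i - (z ord0 i)%:~R * eta| < eta].

Lemma open_dist (c eta : R) : open [set y : R | `|y - c| < eta].
Proof.
rewrite (_ : [set y | _] = [set y | c - eta < y] `&` [set y | y < c + eta]).
  by apply: openI; [exact: open_gt|exact: open_lt].
apply/seteqP; split => y /=; rewrite ltr_distl.
  by case/andP => -> ->.
by case => -> ->.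
Qed.

Lemma box_meas eta z : measurable (box eta z : set (borelRd R d)).
Proof.
apply: meas_forall => i; apply: open_meas.
have := @open_pre R d (fun e : 'rV[R]_d => e ord0 i) _ (@coord_continuous R 1 d ord0 i)
  (open_dist ((z ord0 i)%:~R * eta) eta).
by [].
Qed.

Lemma box_cover eta : 0 < eta -> forall e : 'rV[R]_d, exists z, box eta z e.
Proof.
move=> he e; exists (\row_i Num.floor (e ord0 i / eta)) => i; rewrite mxE.
set q := e ord0 i / eta.
have eq : e ord0 i = q * eta by rewrite /q divfK // gt_eqF.
have := floor_itv q; rewrite eq -mulrBl normrM (gtr0_norm he) => /andP [h1 h2].
rewrite gtr_pMl // ger0_norm ?subr_ge0 //.
by move: h2; rewrite intrD; lra.
Qed.

Lemma box_diam delta (z : 'rV[int]_d) : 0 < delta ->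
  forall x y, box (delta / (2 * (d%:R + 1))) z x ->
              box (delta / (2 * (d%:R + 1))) z y -> enorm (x - y) < delta.
Proof.
move=> hd x y hx hy.
set D : R := d%:R.
have D0 : 0 <= D by rewrite /D ler0n.
set tau := delta / (D + 1).
have tau0 : 0 < tau by rewrite divr_gt0 // ltr_wpDl.
have eta2 : delta / (2 * (D + 1)) = tau / 2.
  by rewrite /tau invfM mulrA mulrAC.
have hi : forall i, (x - y) ord0 i ^+ 2 <= tau ^+ 2.
  move=> i; have := hx i; have := hy i; rewrite eta2 !mxE => h1 h2.
  set c := (z ord0 i)%:~R * (tau / 2) in h1 h2.
  have : `|x ord0 i - y ord0 i| < tau.
    have := ler_normB (x ord0 i - c) (y ord0 i - c).
    rewrite (_ : x ord0 i - c - (y ord0 i - c) = x ord0 i - y ord0 i); last by ring.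
    move=> h; apply: le_lt_trans h _; lra.
  move=> h; rewrite -real_normK ?num_real //; apply: ltW.
  have n0 := normr_ge0 (x ord0 i - y ord0 i); rewrite !expr2; nra.
have hs : dotv (x - y) (x - y) <= D * tau ^+ 2.
  rewrite /dotv (eq_bigr (fun i => (x - y) ord0 i ^+ 2)); last by move=> i _; rewrite expr2.
  apply: le_trans (ler_sum _ (fun i _ => hi i)) _.
  by rewrite sumr_const card_ord /D mulr_natl.
have hD : D * tau ^+ 2 < delta ^+ 2.
  have -> : delta = tau * (D + 1) by rewrite /tau divfK // gt_eqF // ltr_wpDl.
  have t2 : 0 < tau ^+ 2 by rewrite exprn_gt0.
  rewrite exprMn; nra.
rewrite /enorm -(gtr0_norm hd) -sqrtr_sqr ltr_sqrt ?exprn_gt0 //.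
exact: le_lt_trans hs hD.
Qed.
End B.
Lemma dotvZl (R : realType) (d : nat) (u v : 'rV[R]_d) c :
  dotv (c *: u) v = c * dotv u v.
Proof. by rewrite dotvC dotvZr dotvC. Qed.

Lemma aux_half (R : realFieldType) (b L y : R) : b < L -> b <= L + y -> b < L + y / 2.
Proof. move=> h1 h2; lra. Qed.

Lemma aux_half_le (R : realFieldType) (e : R) : 0 < e -> e / 2 <= e.
Proof. move=> h; lra. Qed.

Lemma nl_pos (s k1 : nat) : (k1 < s + k1)%N -> (0 < s)%N.
Proof. lia. Qed.
Lemma nl_sub (n s k1 : nat) : (n < s + k1)%N -> (n < s)%N = false -> ((n - s)%N < k1)%N.
Proof. move=> h /negbT; rewrite -leqNgt; lia. Qed.
Lemma nl_inj (n n' s : nat) : (n < s)%N = false -> (n' < s)%N = false -> (n - s)%N = (n' - s)%N -> n = n'.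
Proof. move=> /negbT; rewrite -leqNgt => h1 /negbT; rewrite -leqNgt; lia. Qed.
Lemma nl_gt (n n' s : nat) : (n < n')%N -> (n < s)%N = false -> (n' < s)%N = false.
Proof. move=> h /negbT; rewrite -leqNgt => h1; apply/negbTE; rewrite -leqNgt; lia. Qed.
Lemma nl_lt (n n' s : nat) : (n < n')%N -> (n < s)%N = false -> ((n - s)%N < (n' - s)%N)%N.
Proof. move=> h /negbT; rewrite -leqNgt => h1; lia. Qed.

Arguments nl_pos {s k1}.
Arguments nl_sub {n s k1}.
Arguments nl_inj {n n' s}.
Arguments nl_gt {n n' s}.
Arguments nl_lt {n n' s}.

Section Core.
Variables (R : realType) (d m : nat) (a : 'I_m -> 'rV[R]_d) (b : 'I_m -> R)
  (ha : forall j, a j != 0)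
  (E : set 'rV[R]_d) (mu : probability (borelRd R d) R)
  (hwi : weakly_incoming a b E mu) (delta : R) (hdelta : 0 < delta) (j0 : 'I_m).

Local Notation P := (polytope a b).

Definition good_F (F : set 'rV[R]_d) := F `<=` E /\
  measurable (F : set (borelRd R d)) /\ (0 < mu F)%E /\
  forall x y, F x -> F y -> enorm (x - y) < delta.

Lemma strict_of u i : 0 < lform (a i) u -> strictly_incoming a u i.
Proof.
move=> h; have u0 : u != 0.
  by apply: contraTneq h => ->; rewrite /lform dotv0r ltxx.
split => //; rewrite /nuv dotvZr dotvC.
by rewrite mulr_gt0 // invr_gt0 enorm_gt0.
Qed.

Lemma inc_of u i : u != 0 -> 0 <= lform (a i) u -> incoming a u i.
Proof.
move=> u0 h; split => //; rewrite /nuv dotvZr dotvC.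
by rewrite mulr_ge0 // invr_ge0 ltW // enorm_gt0.
Qed.

Lemma lin j y c e : lform (a j) (y + c *: e) = lform (a j) y + c * lform (a j) e.
Proof. by rewrite /lform dotvDr dotvZr. Qed.

Lemma core k : forall x, x \in closure P -> #|act a b x| = k ->
  exists (F : nat -> set 'rV[R]_d) (th : nat -> R) (idx : nat -> 'I_m),
   [/\ forall n, (n < k)%N -> good_F (F n),
       forall n, (n < k)%N -> th n = 1 \/ th n = -1,
       forall n n', (n < k)%N -> (n' < k)%N -> idx n = idx n' -> n = n',
       forall j, j \in act a b x <-> exists2 n, (n < k)%N & idx n = j &
       forall n fn, (n < k)%N -> F n fn ->
         strictly_incoming a (th n *: fn) (idx n) /\
         forall n', (n < n')%N -> (n' < k)%N -> incoming a (th n *: fn) (idx n')].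
Proof.
elim/ltn_ind: k => k IH x hx hk.
case: (posnP k) => [k0|kpos].
  exists (fun _ => set0), (fun _ => 1), (fun _ => j0); split; rewrite ?k0 //.
  move=> j; rewrite k0 in hk; rewrite (cards0_eq hk) inE; split => //.
  by case.
have xnP : x \notin P.
  apply/negP => hP; move: hk; rewrite poly_act // cards0 => k0.
  by rewrite -k0 ltnn in kpos.
have hxd : x \in closure P `\` P.
  by apply/mem_set; split; [exact/set_mem|move/mem_set; apply/negP].
have [eps [eps0 [th0 [hth0 [F0 [F0E [mF0 [muF0 hdec]]]]]]]] := hwi _ hxd.
have ck : cfun a b x = (k%:R)%:E by rewrite cfun_cl // hk.
have H1 : forall e, F0 e -> forall t, 0 < t -> t <= eps ->
    (x + (th0 * t) *: e) \in closure P /\ (#|act a b (x + (th0 * t) *: e)| < k)%N.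
  move=> e Fe t t0 te; have h := hdec t e t0 te Fe; rewrite ck in h.
  have hc := cfun_lt_cl _ _ _ _ h; split => //.
  by move: h; rewrite cfun_cl // lte_fin ltr_nat.
have actE : forall y i, i \in act a b y -> lform (a i) y = b i.
  by move=> y i; rewrite inE => /eqP.
have H2 : forall e, F0 e -> forall i, i \in act a b x -> 0 <= lform (a i) (th0 *: e).
  move=> e Fe i hi; have [hc _] := H1 e Fe eps eps0 (lexx _).
  have := closure_ge _ _ _ hc i; rewrite lin actE // /lform dotvZr => h.
  have : 0 <= eps * (th0 * dotv (a i) e).
    by move: h; rewrite -subr_ge0 addrAC subrr add0r mulrA [eps * th0]mulrC.
  by rewrite pmulr_rge0.
pose Sf e : {set 'I_m} := [set i in act a b x | 0 < lform (a i) (th0 *: e)].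
pose SS (S : {set 'I_m}) := [set e : 'rV[R]_d | Sf e = S].
have mSS : forall S, measurable (SS S : set (borelRd R d)).
  move=> S.
  have -> : SS S = [set e | forall i, (i \in S) = ((i \in act a b x) && (0 < dotv (th0 *: a i) e))].
    apply/seteqP; split => e /=.
      by move=> <- i; rewrite inE /lform dotvZr dotvZl.
    by move=> h; apply/setP => i; rewrite h inE /lform dotvZr dotvZl.
  apply: meas_forall => i.
  case: (i \in act a b x); case: (i \in S) => /=.
  - apply: open_meas; have := open_pre (dotv_cont (th0 *: a i)) (@open_gt _ 0).
    by rewrite (_ : _ @^-1` _ = [set e | true = (0 < dotv (th0 *: a i) e)]) //;
      apply/seteqP; split => e /= h //; rewrite h.
  - apply: closed_meas; have := closed_pre (dotv_cont (th0 *: a i)) (@closed_le _ 0).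
    rewrite (_ : _ @^-1` _ = [set e | false = (0 < dotv (th0 *: a i) e)]) //.
    apply/seteqP; split => e /=; first by rewrite leNgt => /negbTE ->.
    by move=> h; rewrite leNgt -h.
  - rewrite (_ : (fun _ => true = false) = set0); first exact: measurable0.
    by apply/seteqP; split => e.
  - rewrite (_ : (fun _ => false = false) = setT); first exact: measurableT.
    by apply/seteqP; split => e.
pose eta := delta / (2 * (d%:R + 1)).
have eta0 : 0 < eta by rewrite divr_gt0 // mulr_gt0 // ltr_wpDl.
pose G (p : {set 'I_m} * 'rV[int]_d) := SS p.1 `&` @box R d eta p.2.
have [[S z] posG] : exists p, (0 < mu (F0 `&` G p))%E.
  apply: pos_select => //.
    move=> e _; have [z hz] := @box_cover R d eta eta0 e.
    by exists (Sf e, z) => //.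
  by move=> p; apply: measurableI; [exact: mSS|exact: (@box_meas R d)].
set Gs := F0 `&` G (S, z) in posG.
have gGs : good_F Gs.
  split; first by move=> e [/F0E].
  split; first by apply: measurableI => //; apply: measurableI; [exact: mSS|exact: (@box_meas R d)].
  split => //.
  by move=> y1 y2 [_ [_ h1]] [_ [_ h2]]; exact: (@box_diam R d delta z hdelta _ _ h1 h2).
have [e0 [Fe0 [He0' _]]] : Gs !=set0.
  apply/set0P; apply/negP => /eqP h0; by rewrite h0 measure0 ltxx in posG.
have He0 : Sf e0 = S := He0'.
have eps2 : 0 < eps / 2 by rewrite divr_gt0.
have eps2e : eps / 2 <= eps by exact: aux_half_le.
pose x1 := x + (th0 * (eps / 2)) *: e0.
have [hx1 hk1] := H1 e0 Fe0 _ eps2 eps2e.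
have [hxe _] := H1 e0 Fe0 eps eps0 (lexx _).
have SSx : S \subset act a b x.
  by apply/fintype.subsetP => i; rewrite -He0 inE => /andP [].
have act1 : act a b x1 = act a b x :\: S.
  apply/setP => j; rewrite [in RHS]inE -He0 inE.
  have e1 : (th0 * (eps / 2)) * lform (a j) e0 = eps / 2 * lform (a j) (th0 *: e0).
    rewrite /lform dotvZr; ring.
  rewrite /x1 lin e1 /Sf !inE.
  case hj : (j \in act a b x).
    rewrite (actE _ _ hj) eqxx /= andbT.
    have := H2 e0 Fe0 j hj; rewrite le_eqVlt => /orP [/eqP <-|tp].
      by rewrite mulr0 addr0 eqxx ltxx.
    rewrite tp /= gt_eqF //.
    by rewrite ltrDl mulr_gt0.
  have hj' : (lform (a j) x == b j) = false by move: hj; rewrite inE.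
  rewrite hj' /= ?andbF.
  have gt : b j < lform (a j) x.
    by rewrite lt_neqAle closure_ge // andbT eq_sym hj'.
  have := closure_ge _ _ _ hxe j; rewrite lin.
  have e2 : (th0 * eps) * lform (a j) e0 = eps * lform (a j) (th0 *: e0).
    rewrite /lform dotvZr; ring.
  rewrite e2 => h; rewrite gt_eqF //.
  set t := lform (a j) (th0 *: e0) in h *.
  have -> : eps / 2 * t = (eps * t) / 2 by rewrite mulrAC.
  exact: aux_half gt h.
set s := #|S|.
set k1 := #|act a b x1|.
have hks : k = (s + k1)%N.
  rewrite /k1 act1 cardsD (finset.setIidPr SSx) -hk subnKC //; exact: subset_leq_card.
have [F' [th' [idx' [h1 h2 h3 h4 h5]]]] := IH k1 hk1 x1 hx1 erefl.
have spos : (0 < s)%N by move: hk1; rewrite hks; exact: nl_pos.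
have x1sub : forall j, j \in act a b x1 -> j \in act a b x /\ j \notin S.
  by move=> j; rewrite act1 inE => /andP [-> ->].
have sz : size (enum S) = s by rewrite -cardE.
rewrite hks.
exists (fun n => if (n < s)%N then Gs else F' (n - s)%N),
       (fun n => if (n < s)%N then th0 else th' (n - s)%N),
       (fun n => if (n < s)%N then nth j0 (enum S) n else idx' (n - s)%N).
have nthS : forall n, (n < s)%N -> nth j0 (enum S) n \in S.
  by move=> n ns; rewrite -mem_enum mem_nth // sz.
have inx1 : forall n, (n < k1)%N -> idx' n \in act a b x1.
  by move=> n nk; apply/h4; exists n.
have idxx : forall n, (n < s + k1)%N ->
    (if (n < s)%N then nth j0 (enum S) n else idx' (n - s)%N) \in act a b x.
  move=> n nk; case: ifP => ns; first by apply: (fintype.subsetP SSx); exact: nthS.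
  by have [] := x1sub _ (inx1 _ (nl_sub nk ns)).
split.
- move=> n nk; case: ifP => ns //; apply: h1; exact: nl_sub nk ns.
- move=> n nk; case: ifP => ns //; apply: h2; exact: nl_sub nk ns.
- move=> n n' nk nk'; case: ifP => ns; case: ifP => ns'.
  + move=> /eqP; rewrite nth_uniq ?sz ?enum_uniq //; exact/eqP.
  + move=> heq; have := nthS n ns; rewrite heq.
    by have [_ /negP h] := x1sub _ (inx1 _ (nl_sub nk' ns')); move/h.
  + move=> heq; have := nthS n' ns'; rewrite -heq.
    by have [_ /negP h] := x1sub _ (inx1 _ (nl_sub nk ns)); move/h.
  + move=> /h3 h; have := h (nl_sub nk ns) (nl_sub nk' ns'); exact: nl_inj.
- move=> j; split => [hj|[n nk <-]]; last exact: idxx.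
  case: (boolP (j \in S)) => jS.
    exists (index j (enum S)); first by rewrite (leq_trans _ (leq_addr k1 s)) // -sz index_mem mem_enum.
    by rewrite -sz index_mem mem_enum jS nth_index // mem_enum.
  have : j \in act a b x1 by rewrite act1 inE jS hj.
  move/h4 => [n' n'k <-]; exists (s + n')%N; first by rewrite ltn_add2l.
  by rewrite ltnNge leq_addr /= addKn.
- move=> n fn nk; case: ifP => ns.
  + move=> [Ff [Sf_ _]].
    have hS : nth j0 (enum S) n \in Sf fn by rewrite Sf_; exact: nthS.
    move: hS; rewrite inE => /andP [_ hpos].
    have hst := strict_of _ _ hpos; split => // n' nn' n'k.
    have := idxx n' n'k; case: ifP => _ hi;
    (apply: inc_of; [by case: hst|exact: H2]).
  + move=> Fn; have [hs hi] := h5 (n - s)%N fn (nl_sub nk ns) Fn; split => // n' nn' n'k.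
    have ns' := nl_gt nn' ns.
    rewrite ns'; apply: hi; [exact: nl_lt nn' ns|exact: nl_sub n'k ns'].
Qed.
End Core.
Lemma ord0_all (P : 'I_0 -> Prop) : forall n, P n.
Proof. by move=> n; have := ltn_ord n; rewrite ltn0. Qed.

Theorem proposition5p4 (R : realType) (d m : nat) (hd : (2 <= d)%N)
  (a : 'I_m -> 'rV[R]_d) (b : 'I_m -> R)
  (ha : forall j, a j != 0)
  (hne : polytope a b !=set0)
  (hbd : bounded_set (polytope a b))
  (E : set 'rV[R]_d) (hE : measurable (E : set (borelRd R d)))
  (mu : probability (borelRd R d) R) (hmuE : mu E = 1%E)
  (hwi : weakly_incoming a b E mu)
  (x0 : 'rV[R]_d) (hx0 : x0 \in closure (polytope a b))
  (k : nat) (hk : cfun a b x0 = (k%:R)%:E) :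
  forall delta : R, 0 < delta ->
  exists eps : R, 0 < eps /\
  exists F : 'I_k -> set 'rV[R]_d,
    (forall n, F n `<=` E /\ measurable (F n : set (borelRd R d)) /\ (0 < mu (F n))%E
       /\ forall x y, F n x -> F n y -> enorm (x - y) < delta) /\
    exists (r0 : R) (I : {set 'I_m}),
      0 < r0 /\ #|I| = k /\
      (* (a) *)
      polytope a b `&` eball x0 r0 =
        (\bigcap_(i in [set j | j \in I]) Hplus a b i) `&` eball x0 r0 /\
      (* (b) *)
      exists (theta : 'I_k -> R) (idx : 'I_k -> 'I_m),
        (forall n, theta n = 1 \/ theta n = -1) /\
        injective idx /\ [set idx n | n in [set: 'I_k]]%classic = [set j | j \in I] /\
        forall n (fn : 'rV[R]_d), F n fn ->
          strictly_incoming a (theta n *: fn) (idx n) /\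
          forall n' : 'I_k, (n < n')%N -> incoming a (theta n *: fn) (idx n').
Proof.
move=> delta hdelta.
have ck := cfun_cl a b x0 hx0; rewrite hk in ck.
have hk' : #|act a b x0| = k.
  by case: ck => /eqP; rewrite eqr_nat => /eqP ->.
have [r0 r0pos hA] := @part_a R d m a b x0 hx0.
exists 1; split => //.
case: (posnP k) => [k0|kpos].
  have a0 : act a b x0 = finset.set0 by apply: cards0_eq; rewrite hk'.
  clear hk ck hk'; rewrite k0.
  have idx0 : 'I_0 -> 'I_m by move=> n; have := ltn_ord n; rewrite ltn0.
  exists (fun _ => set0); split; first by move=> n; have := ltn_ord n; rewrite ltn0.
  exists r0, (act a b x0); split => //; split; first by rewrite a0 cards0.
  split => //.
  exists (fun _ => 1), idx0; split; first by move=> n; have := ltn_ord n; rewrite ltn0.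
  split; first by move=> n; have := ltn_ord n; rewrite ltn0.
  split; last by move=> n; have := ltn_ord n; rewrite ltn0.
  apply/seteqP; split => j /=; first by case=> n _; have := ltn_ord n; rewrite ltn0.
  by rewrite a0 inE.
have [j0 _] : exists j0, j0 \in act a b x0.
  by apply/set0Pn; rewrite -card_gt0 hk'.
have [F [th [idx [h1 h2 h3 h4 h5]]]] :=
  @core R d m a b ha E mu hwi delta hdelta j0 k x0 hx0 hk'.
exists (fun n : 'I_k => F n); split.
  move=> n; exact: h1 n (ltn_ord n).
exists r0, (act a b x0); split => //; split => //; split => //.
exists (fun n : 'I_k => th n), (fun n : 'I_k => idx n); split.
  move=> n; exact: h2 _ (ltn_ord n).
split.
  move=> n n' /h3 h; apply/val_inj; exact: h (ltn_ord n) (ltn_ord n').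
split.
  apply/seteqP; split => j /=.
    by case=> n _ <-; apply/h4; exists n.
  by move/h4 => [n nk <-]; exists (Ordinal nk).
move=> n fn Fn; have [hs hi] := h5 n fn (ltn_ord n) Fn; split => // n' nn'.
exact: hi nn' (ltn_ord n').
Qed.
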